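(* Let $n$ be a positive integer and let $A(n)=(a_{ij})_{i,j\in\mathbb{N}}$ be the greedy matrix described in the context. Then $A(n)$ is symmetric: $a_{ij}=a_{ji}$ for all $i,j\geq 1$.
   Context: $\mathbb{N}=\{1,2,3,\dots\}$. Fix a positive integer $n$. The infinite $\{0,1\}$-matrix $A(n)=(a_{ij})_{i,j\in\mathbb{N}}$ is defined recursively. Its entries are determined row by row (row $1$ first), and within each row from left to right, so that $a_{kl}$ is determined after all $a_{ij}$ with $i<k$ and all $a_{kj}$ with $j<l$. One sets $a_{kl}=1$ if and only if all of the following hold: (1) $\sum_{j<l}a_{kj}<n+1$; (2) $\sum_{i<k}a_{il}<n+1$; (3) there is no pair $(i,j)$ with $1\le i<k$, $1\le j<l$ and $a_{ij}=a_{il}=a_{kj}=1$. Otherwise $a_{kl}=0$. *)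

(* Defs.v *)
From mathcomp Require Import all_boot.
Set Implicit Arguments. Unset Strict Implicit. Unset Printing Implicit Defensive.

(* An infinite {0,1}-matrix is a function a : nat -> nat -> bool; only the
   entries a i j with i, j >= 1 are meaningful (N = {1,2,3,...}).
   [greedy_rule n a] says that every entry a k l (k, l >= 1) is obtained by the
   greedy rule of the paper from the previously determined entries:
   a k l = 1 iff
   (1) sum_{1<=j<l} a k j < n+1,
   (2) sum_{1<=i<k} a i l < n+1,
   (3) there is no (i,j) with 1<=i<k, 1<=j<l and a i j = a i l = a k j = 1.
   Since the right-hand side only refers to entries determined earlier in the
   row-by-row / left-to-right order, this rule determines a uniquely on
   positive indices: it is exactly the matrix A(n). *)
Definition greedy_rule (n : nat) (a : nat -> nat -> bool) : Prop :=
  forall k l : nat, 0 < k -> 0 < l ->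
    a k l =
    [&& \sum_(1 <= j < l) a k j < n.+1,
        \sum_(1 <= i < k) a i l < n.+1 &
        ~~ [exists i : 'I_k, exists j : 'I_l,
              [&& 0 < (i : nat), 0 < (j : nat), a i j, a i l & a k j]]].

(* Main.v *)
Require Import Defs.
From mathcomp Require Import all_boot.
From mathcomp Require Import zify.
From Stdlib Require Import Lia.

Lemma greedy_uniq {n} {a b : nat -> nat -> bool} : greedy_rule n a -> greedy_rule n b ->
  forall s k l, k + l <= s -> 0 < k -> 0 < l -> a k l = b k l.
Proof.
move=> Ha Hb; elim=> [|s IH] k l Hs k0 l0; first by move: Hs k0; case: k.
rewrite (Ha k l k0 l0) (Hb k l k0 l0).
have E1 : \sum_(1 <= j < l) a k j = \sum_(1 <= j < l) b k j.
  apply: eq_big_nat => j /andP[j1 jl]; congr nat_of_bool; apply: IH => //.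
  lia.
have E2 : \sum_(1 <= i < k) a i l = \sum_(1 <= i < k) b i l.
  apply: eq_big_nat => i /andP[i1 ik]; congr nat_of_bool; apply: IH => //.
  lia.
rewrite E1 E2; congr [&& _, _ & ~~ _].
apply: eq_existsb => i; apply: eq_existsb => j.
case: (posnP i) => [->|i0] //=; case: (posnP j) => [->|j0] //=.
have ik := ltn_ord i; have jl := ltn_ord j.
rewrite !IH //.
- lia.
- lia.
- lia.
Qed.

Lemma greedy_trans {n} {a : nat -> nat -> bool} : greedy_rule n a -> greedy_rule n (fun i j => a j i).
Proof.
move=> Ha k l k0 l0 /=; rewrite (Ha l k l0 k0) andbA [X in X && _]andbC -andbA.
congr [&& _, _ & ~~ _].
apply/existsP/existsP.
- case=> i /existsP[j /and5P[i0 j0 h1 h2 h3]].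
  by exists j; apply/existsP; exists i; apply/and5P; split.
- case=> i /existsP[j /and5P[i0 j0 h1 h2 h3]].
  by exists j; apply/existsP; exists i; apply/and5P; split.
Qed.

Theorem theorem3p2 (n : nat) (a : nat -> nat -> bool) :
  0 < n -> greedy_rule n a ->
  forall i j : nat, 0 < i -> 0 < j -> a i j = a j i.
Proof.
move=> _ Ha i j i0 j0.
exact: (greedy_uniq Ha (greedy_trans Ha) (i + j) i j (leqnn (i + j)) i0 j0).
Qed.
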